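(* Let $p\ge 1$ be an integer. Then $\lambda_{\min}(\mathcal U'(p)^c)$ is the least real root of the polynomial $$g(\lambda;p)=(-4+2p)+(3-5p)\lambda+(6-p)\lambda^2+(1+4p)\lambda^3+(-2+p)\lambda^4-\lambda^5 .$$
   Context: All graphs are simple and finite. For a graph $G$, $\lambda_{\min}(G)$ denotes the least eigenvalue of the adjacency matrix $A(G)$, and $G^c$ denotes the complement of $G$. $K_{1,p}$ is the star with $p$ edges, whose degree-one vertices are called pendant vertices. For an integer $p\ge 1$, $\mathcal U'(p)$ is the graph of order $p+4$ obtained from disjoint copies of $K_{1,p}$ and the triangle $C_3$ by adding one edge joining a pendant vertex of $K_{1,p}$ to a vertex of $C_3$. *)

(* Defs.v *)
From HB Require Import structures.
From mathcomp Require Import all_boot all_order all_algebra.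
Set Implicit Arguments. Unset Strict Implicit. Unset Printing Implicit Defensive.
Import Order.TTheory GRing.Theory Num.Theory.
Local Open Scope ring_scope.

Definition adj_mx (R : nzRingType) (n : nat) (e : rel 'I_n) : 'M[R]_n :=
  \matrix_(i, j) (e i j)%:R.

Definition compl_graph (n : nat) (e : rel 'I_n) : rel 'I_n :=
  fun i j => (i != j) && ~~ e i j.

(* The graph U'(p) on vertices 0..p+3:
   0 = centre of K_{1,p}; 1..p = pendant vertices of K_{1,p};
   p+1, p+2, p+3 = triangle C_3; extra edge {1, p+1}. *)
Definition Uprime_edge0 (p i j : nat) : bool :=
  [|| (i == 0)%N && (1 <= j <= p)%N,
      [&& (p.+1 <= i)%N, (p.+1 <= j)%N, (i <= p + 3)%N, (j <= p + 3)%N & i != j]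
    | (i == 1)%N && (j == p.+1)%N ].

Definition Uprime (p : nat) : rel 'I_(p + 4) :=
  fun i j => Uprime_edge0 p i j || Uprime_edge0 p j i.

Definition is_lambda_min (R : rcfType) (n : nat) (A : 'M[R]_n) (x : R) : Prop :=
  eigenvalue A x /\ forall y : R, eigenvalue A y -> x <= y.

Definition is_least_root (R : rcfType) (q : {poly R}) (x : R) : Prop :=
  root q x /\ forall y : R, root q y -> x <= y.

Definition gpoly (R : rcfType) (p : nat) : {poly R} :=
  let P : R := p%:R in
    ((-4) + 2 * P)%:P
  + (3 - 5 * P)%:P * 'X
  + (6 - P)%:P * 'X^2
  + (1 + 4 * P)%:P * 'X^3
  + ((-2) + P)%:P * 'X^4
  - 'X^5.

Arguments Uprime p : clear implicits.

(* Main.v *)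
Require Import Defs.
From HB Require Import structures.
From mathcomp Require Import all_boot all_order all_algebra zify ring lra.
From mathcomp Require Import polyrcf.
Import Order.TTheory GRing.Theory Num.Theory.
Set Implicit Arguments. Unset Strict Implicit. Unset Printing Implicit Defensive.
Local Open Scope ring_scope.

Definition En (p k j : nat) : bool := Uprime_edge0 p k j || Uprime_edge0 p j k.

Lemma sum_mem (R : nzRingType) n (F : nat -> R) (s : seq nat) :
  uniq s -> all (fun x => x < n)%N s ->
  \sum_(0 <= k < n) F k * (k \in s)%:R = \sum_(k <- s) F k.
Proof.
move=> us sn.
transitivity (\sum_(0 <= k < n | k \in s) F k).
  by rewrite [RHS]big_mkcond; apply: eq_bigr => k _; case: (k \in s); rewrite ?mulr1 ?mulr0.
rewrite -big_filter; apply: perm_big; apply: uniq_perm => //.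
  by rewrite filter_uniq // iota_uniq.
move=> x; rewrite mem_filter mem_index_iota /=.
apply/andP/idP => [[]//|xs]; split=> //.
by move/allP: sn => /(_ x xs).
Qed.

Lemma KL (R : nzRingType) p (hp : (1 <= p)%N) (F : nat -> R) (j : 'I_(p+4)) :
  ((\row_(k < p+4) F k) *m adj_mx R (compl_graph (Uprime p))) 0 j =
  \sum_(0 <= k < p+4) F k - F j - \sum_(0 <= k < p+4) F k * (En p k j)%:R.
Proof.
rewrite !mxE.
under eq_bigr => k _ do rewrite !mxE.
pose G k := F k * ((k != j :> nat) && ~~ En p k j)%:R.
transitivity (\sum_(k < p+4) G k).
  by apply: eq_bigr => k _; rewrite /G /compl_graph /Uprime -val_eqE.
rewrite -(big_mkord xpredT G) /G.
transitivity (\sum_(0 <= k < p + 4) (F k - F k * (k \in [:: nat_of_ord j])%:R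
                     - F k * (En p k j)%:R)).
  apply: eq_big_nat => k hk; rewrite inE.
  have : ~~ ((k == j) && En p k j) by rewrite /En /Uprime_edge0; lia.
  by case: (k == j); case: (En p k j) => //= _; rewrite ?mulr0 ?mulr1 ?subr0 ?subrr ?sub0r.
rewrite !sumrB sum_mem //= ?ltn_ord //.
by rewrite big_cons big_nil addr0.
Qed.

Lemma Tsplit (R : nzRingType) p (hp : (1 <= p)%N) (F : nat -> R) :
  \sum_(0 <= k < p+4) F k =
  F 0%N + F 1%N + \sum_(2 <= k < p.+1) F k + F p.+1 + F p.+2 + F p.+3.
Proof.
have -> : (p + 4 = p.+4)%N by lia.
rewrite big_nat_recr // big_nat_recr // big_nat_recr //.
rewrite big_ltn // big_ltn; last by lia.
change (F 0%N + (F 1%N + \sum_(2 <= k < p.+1) F k) + F p.+1 + F p.+2 + F p.+3 = F 0%N + F 1%N + \sum_(2 <= k < p.+1) F k + F p.+1 + F p.+2 + F p.+3).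
by rewrite !addrA.
Qed.

Lemma Nlist (R : nzRingType) p (F : nat -> R) (J : nat) (s : seq nat) :
  (forall k, (k < p + 4)%N -> En p k J = (k \in s)) -> uniq s ->
  all (fun x => x < p + 4)%N s ->
  \sum_(0 <= k < p+4) F k * (En p k J)%:R = \sum_(k <- s) F k.
Proof.
move=> hE us sn; rewrite -(@sum_mem R (p+4)) //.
by apply: eq_big_nat => k /andP[_ hk]; rewrite hE.
Qed.

Ltac solve_list := rewrite /= ?inE /En /Uprime_edge0; lia.

Lemma N0 (R : nzRingType) p (hp : (1 <= p)%N) (F : nat -> R) :
  \sum_(0 <= k < p+4) F k * (En p k 0)%:R = F 1%N + \sum_(2 <= k < p.+1) F k.
Proof.
rewrite (@Nlist R p F 0 (index_iota 1 p.+1)).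
- by rewrite big_ltn.
- by move=> k hk; rewrite mem_index_iota /En /Uprime_edge0; lia.
- exact: iota_uniq.
- by apply/allP => x; rewrite mem_index_iota; lia.
Qed.

Lemma N1 (R : nzRingType) p (hp : (1 <= p)%N) (F : nat -> R) :
  \sum_(0 <= k < p+4) F k * (En p k 1)%:R = F 0%N + F p.+1.
Proof.
rewrite (@Nlist R p F 1 [:: 0%N; p.+1]); try by [move=> *; solve_list | solve_list].
by rewrite !big_cons big_nil addr0.
Qed.

Lemma N2 (R : nzRingType) p (hp : (1 <= p)%N) (F : nat -> R) J :
  (2 <= J <= p)%N ->
  \sum_(0 <= k < p+4) F k * (En p k J)%:R = F 0%N.
Proof.
move=> hJ.
rewrite (@Nlist R p F J [:: 0%N]); try by [move=> *; solve_list | solve_list].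
by rewrite !big_cons big_nil addr0.
Qed.

Lemma N3 (R : nzRingType) p (hp : (1 <= p)%N) (F : nat -> R) :
  \sum_(0 <= k < p+4) F k * (En p k p.+1)%:R = F 1%N + F p.+2 + F p.+3.
Proof.
rewrite (@Nlist R p F p.+1 [:: 1%N; p.+2; p.+3]); try by [move=> *; solve_list | solve_list].
by rewrite !big_cons big_nil addr0 addrA.
Qed.

Lemma N4 (R : nzRingType) p (hp : (1 <= p)%N) (F : nat -> R) :
  \sum_(0 <= k < p+4) F k * (En p k p.+2)%:R = F p.+1 + F p.+3.
Proof.
rewrite (@Nlist R p F p.+2 [:: p.+1; p.+3]); try by [move=> *; solve_list | solve_list].
by rewrite !big_cons big_nil addr0.
Qed.

Lemma N5 (R : nzRingType) p (hp : (1 <= p)%N) (F : nat -> R) :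
  \sum_(0 <= k < p+4) F k * (En p k p.+3)%:R = F p.+1 + F p.+2.
Proof.
rewrite (@Nlist R p F p.+3 [:: p.+1; p.+2]); try by [move=> *; solve_list | solve_list].
by rewrite !big_cons big_nil addr0.
Qed.
Definition gv (R : nzRingType) (P y : R) : R :=
  (-4 + 2 * P) + (3 - 5 * P) * y + (6 - P) * y ^+ 2 + (1 + 4 * P) * y ^+ 3
  + (-2 + P) * y ^+ 4 - y ^+ 5.

Lemma hornerg (R : rcfType) p (y : R) : (gpoly R p).[y] = gv p%:R y.
Proof. rewrite /gpoly /gv !hornerE. ring. Qed.

Lemma least_root (R : rcfType) p (hp : (1 <= p)%N) :
  exists x0 : R, is_least_root (gpoly R p) x0 /\ x0 < -2.
Proof.
set g := gpoly R p.
have P1 : 1 <= (p%:R : R) by rewrite ler1n.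
have g2 : g.[-2] < 0.
  rewrite /g hornerg /gv. nra.
have gM : 0 < g.[- (p%:R + 4)].
  rewrite /g hornerg.
  have -> : (p%:R : R) = (p%:R - 1) + 1 by ring.
  have : 0 <= (p%:R : R) - 1 by lra.
  move: (p%:R - 1) => q q0.
  have -> : gv (q + 1) (-(q + 1 + 4)) = 2008 + 2429*q + 1225*q^+2 + 314*q^+3 + 40*q^+4 + 2*q^+5
    by rewrite /gv; ring.
  have := exprn_ge0 2 q0; have := exprn_ge0 3 q0; have := exprn_ge0 4 q0; have := exprn_ge0 5 q0.
  lra.
have gn0 : g != 0 by apply: contraTneq g2 => ->; rewrite horner0 ltxx.
set a := Num.min (- (p%:R + 4)) (- cauchy_bound g).
have [z zi zr] : {z | z \in `](- (p%:R + 4)), (-2)[ & root g z}.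
  apply: poly_ivtoo; first by lra.
  by rewrite (pmulr_rlt0 _ gM).
have : z \in roots g a (-2).
  apply: root_in_roots => //.
  rewrite in_itv /=; move: zi; rewrite in_itv /= => /andP[z1 z2].
  rewrite z2 andbT; apply: le_lt_trans z1; by rewrite ge_min lexx.
case E: (roots g a (-2)) => [//|x0 s] _.
have x0r : x0 \in roots g a (-2) by rewrite E mem_head.
have x0lt : x0 < -2 by have := roots_in x0r; rewrite in_itv /= => /andP[].
exists x0; split => //; split; first exact: root_roots x0r.
move=> y ry.
have [ylt|yge] := ltP y (-2); last by apply: ltW; apply: lt_le_trans yge.
have yin : y \in roots g a (-2).
  apply: root_in_roots => //; rewrite in_itv /= ylt andbT.
  have := root_in_cauchy_bound gn0 ry; rewrite in_itv /= => /andP[h _].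
  by apply: le_lt_trans h; rewrite ge_min lexx orbT.
have := sorted_roots a (-2) g; rewrite E /= => pth.
have := order_path_min (@lt_trans _ R) pth.
move: yin; rewrite E inE => /orP[/eqP -> //|ys] /allP /(_ y ys) /ltW //.
Qed.
Definition ca (R : nzRingType) (P y : R) : R := (- 2 + 2*P - 2*y*P + 2*y*y - 4*y*y*P + 2*y*y*y - 1*y*y*y*P + 1*y*y*y*y).
Definition cb (R : nzRingType) (P y : R) : R := (1*y + 1*y*P + 2*y*y).
Definition cc (R : nzRingType) (P y : R) : R := (- 2 + 2*y + 3*y*y).
Definition cd (R : nzRingType) (P y : R) : R := (- 2 - 1*y - 1*y*P + 2*y*y - 1*y*y*P + 1*y*y*y).
Definition ce (R : nzRingType) (P y : R) : R := (- 1 + 1*P + 1*y - 1*y*P + 2*y*y - 1*y*y*P + 1*y*y*y).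
Definition adj00 (R : nzRingType) (P y : R) : R := (2 - 2*P + 2*y*P - 2*y*y + 4*y*y*P - 2*y*y*y + 1*y*y*y*P - 1*y*y*y*y).
Definition adj01 (R : nzRingType) (P y : R) : R := (- 1*y - 1*y*P - 2*y*y).
Definition adj02 (R : nzRingType) (P y : R) : R := (2 - 2*y - 3*y*y).
Definition adj03 (R : nzRingType) (P y : R) : R := (2 + 1*y + 1*y*P - 2*y*y + 1*y*y*P - 1*y*y*y).
Definition adj04 (R : nzRingType) (P y : R) : R := (2 - 2*P - 2*y + 2*y*P - 4*y*y + 2*y*y*P - 2*y*y*y).
Definition adj10 (R : nzRingType) (P y : R) : R := (- 1*y - 1*y*P - 2*y*y).
Definition adj11 (R : nzRingType) (P y : R) : R := (6*y - 3*y*P + 3*y*y*P - 2*y*y*y + 1*y*y*y*P - 1*y*y*y*y).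
Definition adj12 (R : nzRingType) (P y : R) : R := (3*y - 2*y*y - 1*y*y*y).
Definition adj13 (R : nzRingType) (P y : R) : R := (- 4 + 2*P - 2*y*P + 1*y*y - 1*y*y*P).
Definition adj14 (R : nzRingType) (P y : R) : R := (4 - 2*P + 2*y*P - 2*y*y - 2*y*y*y).
Definition adj20 (R : nzRingType) (P y : R) : R := (- 2 + 2*P + 2*y - 2*y*P + 3*y*y - 3*y*y*P).
Definition adj21 (R : nzRingType) (P y : R) : R := (- 3*y + 3*y*P + 2*y*y - 2*y*y*P + 1*y*y*y - 1*y*y*y*P).
Definition adj22 (R : nzRingType) (P y : R) : R := (- 2 + 5*y*y - 1*y*y*y*y).
Definition adj23 (R : nzRingType) (P y : R) : R := (2 - 2*P - 2*y + 2*y*P + 1*y*y*y - 1*y*y*y*P).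
Definition adj24 (R : nzRingType) (P y : R) : R := (- 2 + 2*P + 2*y*y - 2*y*y*P + 2*y*y*y - 2*y*y*y*P).
Definition adj30 (R : nzRingType) (P y : R) : R := (2 + 1*y + 1*y*P - 2*y*y + 1*y*y*P - 1*y*y*y).
Definition adj31 (R : nzRingType) (P y : R) : R := (- 4 + 2*P - 2*y*P + 1*y*y - 1*y*y*P).
Definition adj32 (R : nzRingType) (P y : R) : R := (- 2 + 2*y - 1*y*y*y).
Definition adj33 (R : nzRingType) (P y : R) : R := (2 - 2*P + 4*y + 1*y*y + 3*y*y*P - 2*y*y*y + 1*y*y*y*P - 1*y*y*y*y).
Definition adj34 (R : nzRingType) (P y : R) : R := (- 2 + 2*P - 2*y - 2*y*y*P).
Definition adj40 (R : nzRingType) (P y : R) : R := (1 - 1*P - 1*y + 1*y*P - 2*y*y + 1*y*y*P - 1*y*y*y).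
Definition adj41 (R : nzRingType) (P y : R) : R := (2 - 1*P + 1*y*P - 1*y*y - 1*y*y*y).
Definition adj42 (R : nzRingType) (P y : R) : R := (1 - 1*y*y - 1*y*y*y).
Definition adj43 (R : nzRingType) (P y : R) : R := (- 1 + 1*P - 1*y - 1*y*y*P).
Definition adj44 (R : nzRingType) (P y : R) : R := (1 - 1*P + 2*y - 1*y*P - 1*y*y + 2*y*y*P - 2*y*y*y + 1*y*y*y*P - 1*y*y*y*y).

Lemma id2 (R : comNzRingType) (P y a b s d e : R) :
  y * a - (d + 2 * e) = 0 -> y * b - (s + 2 * e) = 0 ->
  (y + 1) * s - (P - 1) * (b + s + d + 2 * e) = 0 ->
  y * d - (a + s) = 0 -> y * e - (a + b + s) = 0 ->
  [/\ gv P y * a = 0, gv P y * b = 0, gv P y * s = 0, gv P y * d = 0 & gv P y * e = 0].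
Proof.
set ra := y * a - _; set rb := y * b - _; set rs := (y + 1) * s - _;
set rd := y * d - _; set re := y * e - _ => ha hb hs hd he.
have E0 : gv P y * a = adj00 P y * ra + adj01 P y * rb + adj02 P y * rs + adj03 P y * rd + adj04 P y * re.
  rewrite /ra /rb /rs /rd /re /gv /adj00 /adj01 /adj02 /adj03 /adj04; ring.
have E1 : gv P y * b = adj10 P y * ra + adj11 P y * rb + adj12 P y * rs + adj13 P y * rd + adj14 P y * re.
  rewrite /ra /rb /rs /rd /re /gv /adj10 /adj11 /adj12 /adj13 /adj14; ring.
have E2 : gv P y * s = adj20 P y * ra + adj21 P y * rb + adj22 P y * rs + adj23 P y * rd + adj24 P y * re.
  rewrite /ra /rb /rs /rd /re /gv /adj20 /adj21 /adj22 /adj23 /adj24; ring.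
have E3 : gv P y * d = adj30 P y * ra + adj31 P y * rb + adj32 P y * rs + adj33 P y * rd + adj34 P y * re.
  rewrite /ra /rb /rs /rd /re /gv /adj30 /adj31 /adj32 /adj33 /adj34; ring.
have E4 : gv P y * e = adj40 P y * ra + adj41 P y * rb + adj42 P y * rs + adj43 P y * rd + adj44 P y * re.
  rewrite /ra /rb /rs /rd /re /gv /adj40 /adj41 /adj42 /adj43 /adj44; ring.
by rewrite E0 E1 E2 E3 E4 ha hb hs hd he !mulr0 !addr0.
Qed.

Lemma nz1 (R : realFieldType) (P y : R) : y < -2 ->
  ~ (cb P y = 0 /\ cd P y = 0 /\ ce P y = 0).
Proof.
move=> hy [hb [hd he]].
have hcc : 0 < cc P y by rewrite /cc; nra.
have E : (1 + y) * cc P y = (1 + y) * cb P y + cd P y by rewrite /cc /cb /cd; ring.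
rewrite hb hd mulr0 addr0 in E.
move: E hcc; set c := cc P y; nra.
Qed.

Lemma dir2 (R : rcfType) p (hp : (1 <= p)%N) (y : R) (v : 'rV[R]_(p+4)) :
  v *m adj_mx R (compl_graph (Uprime p)) = y *: v -> v != 0 -> y < -2 ->
  root (gpoly R p) y.
Proof.
move=> hv vn0 ylt.
pose F k : R := if (insub k : option 'I_(p+4)) is Some i then v 0 i else 0.
have vF : v = \row_(k < p+4) F k by apply/rowP => i; rewrite mxE /F valK.
set T := \sum_(0 <= k < p+4) F k.
have eqJ : forall j : 'I_(p+4),
    y * F j = T - F j - \sum_(0 <= k < p+4) F k * (En p k j)%:R.
  move=> j; have := congr1 (fun M : 'rV[R]_(p+4) => M 0 j) hv.
  by rewrite /= {1}vF KL // mxE /F valK.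
have Ts := Tsplit hp F; rewrite -/T in Ts.
have e0 := eqJ (@Ordinal (p+4) 0 ltac:(lia)); rewrite /= N0 // in e0.
have e1 := eqJ (@Ordinal (p+4) 1 ltac:(lia)); rewrite /= N1 // in e1.
have e3 := eqJ (@Ordinal (p+4) p.+1 ltac:(lia)); rewrite /= N3 // in e3.
have e4 := eqJ (@Ordinal (p+4) p.+2 ltac:(lia)); rewrite /= N4 // in e4.
have e5 := eqJ (@Ordinal (p+4) p.+3 ltac:(lia)); rewrite /= N5 // in e5.
have eC : forall k, (2 <= k <= p)%N -> (y + 1) * F k = T - F 0%N.
  move=> k hk; have := eqJ (@Ordinal (p+4) k ltac:(lia)); rewrite /= N2 // => h.
  by rewrite mulrDl mul1r h; ring.
set a := F 0%N in e0 e1 Ts eC *; set b := F 1%N in e0 e1 e3 Ts *.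
set s := \sum_(2 <= k < p.+1) F k in e0 Ts *.
set d := F p.+1 in e1 e3 e4 e5 Ts *.
set e := F p.+2 in e3 e4 e5 Ts *. set e' := F p.+3 in e3 e4 e5 Ts *.
have hs : (y + 1) * s = (T - a) * (p%:R - 1).
  rewrite /s mulr_sumr (eq_big_nat _ _ (F2 := fun _ => T - a)); last first.
    by move=> k hk; apply: eC; lia.
  rewrite sumr_const_nat; have -> : (p.+1 - 2 = p - 1)%N by lia.
  by rewrite -(mulr_natr (T - a)) natrB.
have ee : e' = e.
  have : y * (e - e') = 0 by rewrite mulrBr e4 e5; ring.
  move/eqP; rewrite mulf_eq0 => /orP[/eqP y0|]; first by move: ylt; rewrite y0; lra.
  by rewrite subr_eq0 => /eqP.
rewrite ee in Ts e3 e4.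
have r1 : y * a - (d + 2 * e) = 0 by rewrite e0 Ts; ring.
have r2 : y * b - (s + 2 * e) = 0 by rewrite e1 Ts; ring.
have r3 : (y + 1) * s - (p%:R - 1) * (b + s + d + 2 * e) = 0 by rewrite hs Ts; ring.
have r4 : y * d - (a + s) = 0 by rewrite e3 Ts; ring.
have r5 : y * e - (a + b + s) = 0 by rewrite e4 Ts; ring.
have [ga gb gs gd ge] := id2 r1 r2 r3 r4 r5.
apply/rootP; rewrite hornerg; apply/eqP; apply: contraNT vn0 => gn0.
have z : forall t : R, gv p%:R y * t = 0 -> t = 0.
  by move=> t /eqP; rewrite mulf_eq0 (negbTE gn0) => /eqP.
move: (z _ ga) (z _ gb) (z _ gs) (z _ gd) (z _ ge) => a0 b0 s0 d0 e0'.
have T0 : T = 0 by rewrite Ts a0 b0 s0 d0 e0'; ring.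
have y1 : y + 1 != 0 by apply/eqP => h; move: ylt; lra.
apply/eqP; rewrite vF; apply/rowP => i; rewrite !mxE.
have : [|| (i == 0 :> nat), (i == 1 :> nat), (2 <= i <= p)%N, (i == p.+1 :> nat),
           (i == p.+2 :> nat) | (i == p.+3 :> nat)] by have := ltn_ord i; lia.
case/or4P => [/eqP -> //|/eqP -> //|hi|/or3P[/eqP -> //|/eqP -> //|/eqP ->]].
- have := eC _ hi; rewrite T0 a0 subr0 => /eqP; rewrite mulf_eq0 (negbTE y1) /=.
  by move/eqP.
- by rewrite -/e' ee.
Qed.

Lemma dir1 (R : rcfType) p (hp : (1 <= p)%N) (y : R) :
  gv p%:R y = 0 -> y < -2 ->
  exists2 v : 'rV[R]_(p+4), v *m adj_mx R (compl_graph (Uprime p)) = y *: v & v != 0.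
Proof.
move=> hg ylt.
set P : R := p%:R.
pose F k : R := if k == 0%N then ca P y else if k == 1%N then cb P y
  else if (k <= p)%N then cc P y else if k == p.+1 then cd P y else ce P y.
have F0 : F 0%N = ca P y by [].
have F1 : F 1%N = cb P y by [].
have Fd : F p.+1 = cd P y.
  by rewrite /F; repeat case: ifP => ?; try done; lia.
have Fe2 : F p.+2 = ce P y.
  by rewrite /F; repeat case: ifP => ?; try done; lia.
have Fe3 : F p.+3 = ce P y.
  by rewrite /F; repeat case: ifP => ?; try done; lia.
have Fc : forall k, (2 <= k <= p)%N -> F k = cc P y.
  by move=> k hk; rewrite /F; repeat case: ifP => ?; try done; lia.
have Cs : \sum_(2 <= k < p.+1) F k = cc P y * (P - 1).
  rewrite (eq_big_nat _ _ (F2 := fun _ => cc P y)); last by move=> k hk; apply: Fc; lia.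
  rewrite sumr_const_nat; have -> : (p.+1 - 2 = p - 1)%N by lia.
  by rewrite -(mulr_natr (cc P y)) natrB.
exists (\row_(k < p+4) F k).
  apply/rowP => j; rewrite KL // !mxE Tsplit // Cs F0 F1 Fd Fe2 Fe3.
  have : [|| (j == 0 :> nat), (j == 1 :> nat), (2 <= j <= p)%N, (j == p.+1 :> nat),
           (j == p.+2 :> nat) | (j == p.+3 :> nat)] by have := ltn_ord j; lia.
  case/or4P => [/eqP hj|/eqP hj|hj|/or3P[/eqP hj|/eqP hj|/eqP hj]].
  - rewrite hj N0 // Cs F0 F1.
    transitivity (y * ca P y + gv P y); last by rewrite hg addr0.
    rewrite /gv /ca /cb /cc /cd /ce; ring.
  - rewrite hj N1 // F0 F1 Fd /ca /cb /cc /cd /ce; ring.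
  - rewrite N2 // Fc // F0 /ca /cb /cc /cd /ce; ring.
  - rewrite hj N3 // F1 Fd Fe2 Fe3 /ca /cb /cc /cd /ce; ring.
  - rewrite hj N4 // Fd Fe2 Fe3 /ca /cb /cc /cd /ce; ring.
  - rewrite hj N5 // Fd Fe2 Fe3 /ca /cb /cc /cd /ce; ring.
apply/negP => /eqP v0; apply: (@nz1 R P y ylt).
have ev : forall k (hk : (k < p + 4)%N), F k = 0.
  move=> k hk; have := congr1 (fun M : 'rV[R]_(p+4) => M 0 (Ordinal hk)) v0.
  by rewrite !mxE.
rewrite -F1 -Fd -Fe2 !ev //; lia.
Qed.

Unset Implicit Arguments.
Theorem mainTheorem8 (R : rcfType) (p : nat) (hp : (1 <= p)%N) :
  exists x : R,
    is_lambda_min (adj_mx R (compl_graph (Uprime p))) x /\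
    is_least_root (gpoly R p) x.
Proof.
have [x0 [[rx0 lx0] x0lt]] := least_root R hp.
exists x0; split; last by split.
split.
  apply/eigenvalueP; apply: dir1 => //.
  by move/rootP: rx0; rewrite hornerg.
move=> y /eigenvalueP [v hv vn0].
have [ylt|yge] := ltP y (-2); last by apply: ltW; apply: lt_le_trans yge.
by apply: lx0; apply: (dir2 hp hv vn0 ylt).
Qed.
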